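(* For every $x\in\Sigma$ and $a,b\in\Sigma\setminus\{x\}$, $K_{x,a,b}\subseteq\Sigma^*\setminus L_{\mathrm{UNIQ}}$; that is, no string in $K_{x,a,b}$ is uniquely decodable from its bigram counts.
   Context: Let $\Sigma$ be a finite alphabet and $\$\notin\Sigma$ a delimiter symbol; $\Sigma_\$=\Sigma\cup\{\$\}$. The bigram map $\Phi$ sends a string $z\in\$\Sigma^*\$$ to the vector $\Phi(z)\in\mathbb{N}^{\Sigma_\$^2}$ whose $(i,j)$ entry is the number of positions at which the two-letter string $ij$ occurs as a contiguous factor of $z$ (counting overlaps). $L_{\mathrm{UNIQ}}$ is the set of $w\in\Sigma^*$ such that the only $z\in\$\Sigma^*\$$ with $\Phi(z)=\Phi(\$w\$)$ is $z=\$w\$$. For $x\in\Sigma$ write $\Sigma_{\neg x}=\Sigma\setminus\{x\}$. For $x\in\Sigma$ and $a,b\in\Sigma_{\neg x}$ (with $a=b$ allowed) define $I_{x,a,b}=\Sigma^*\,a\,x\,\Sigma_{\neg a}^*\,b\,\Sigma^*$, $J_{x,a,b}=\Sigma^*\,a\,\Sigma_{\neg x}^*\,b\,\Sigma^*$ (regular-expression notation), and $K_{x,a,b}=I_{x,a,b}\cap J_{x,a,b}$. *)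

(* Defs.v *)
From mathcomp Require Import all_boot.
Set Implicit Arguments. Unset Strict Implicit. Unset Printing Implicit Defensive.

(* The extended alphabet Sigma_$ is [option S]; [None] plays the role of $. *)

Definition bigram (T : eqType) (z : seq T) (i j : T) : nat :=
  count (pred1 (i, j)) (zip z (behead z)).

Definition delim (S : Type) (w : seq S) : seq (option S) :=
  None :: rcons (map Some w) None.

Definition same_bigrams (T : eqType) (z z' : seq T) : Prop :=
  forall i j : T, bigram z i j = bigram z' i j.

Definition L_UNIQ (S : eqType) (w : seq S) : Prop :=
  forall w' : seq S, same_bigrams (delim w') (delim w) -> delim w' = delim w.

Definition in_I (S : eqType) (x a b : S) (s : seq S) : Prop :=
  exists u v w : seq S, s = u ++ [:: a; x] ++ v ++ b :: w /\ a \notin v.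

Definition in_J (S : eqType) (x a b : S) (s : seq S) : Prop :=
  exists u v w : seq S, s = u ++ a :: v ++ b :: w /\ x \notin v.

Definition in_K (S : eqType) (x a b : S) (s : seq S) : Prop :=
  in_I x a b s /\ in_J x a b s.

(* Main.v *)
Require Import Defs.
From mathcomp Require Import all_boot.
From mathcomp Require Import zify.

Lemma zip_cat_last (T : Type) (x : T) (s t : seq T) :
  zip (x :: s ++ t) (s ++ t) = zip (x :: s) s ++ zip (last x s :: t) t.
Proof. by elim: s x => [|y s IH] x //=; rewrite IH. Qed.

Lemma swap_perm (T : eqType) (h c d : T) (A B C D E : seq T) :
  last h A = c -> last c B = d -> last d C = c -> last c D = d ->
  perm_eq (zip (h :: A ++ B ++ C ++ D ++ E) (A ++ B ++ C ++ D ++ E))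
          (zip (h :: A ++ D ++ C ++ B ++ E) (A ++ D ++ C ++ B ++ E)).
Proof.
move=> hA hB hC hD.
rewrite zip_cat_last hA zip_cat_last hB zip_cat_last hC zip_cat_last hD.
rewrite zip_cat_last hA zip_cat_last hD zip_cat_last hC zip_cat_last hB.
apply/permP => p; rewrite !count_cat.
lia.
Qed.

Lemma split3 (T : eqType) (p1 q1 p2 q2 : seq T) (y1 y2 : T) :
  p1 ++ y1 :: q1 = p2 ++ y2 :: q2 ->
  (exists m, p2 = p1 ++ y1 :: m /\ q1 = m ++ y2 :: q2) \/
  (p1 = p2 /\ y1 = y2 /\ q1 = q2) \/
  (exists m, p1 = p2 ++ y2 :: m /\ q2 = m ++ y1 :: q1).
Proof.
elim: p1 p2 => [|z p1 IH] [|z2 p2] /=.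
- by case=> -> ->; right; left.
- case=> -> ->; left; by exists p2.
- case=> -> <-; right; right; by exists p1.
- case=> -> /IH [[m [-> ->]]|[[-> [-> ->]]|[m [-> ->]]]].
  + by left; exists m.
  + by right; left.
  + by right; right; exists m.
Qed.

Arguments split3 {T p1 q1 p2 q2 y1 y2}.

Lemma not_uniq_struct (S : eqType) (U B C D W : seq S) (c d y1 y2 : S) :
  last c (y1 :: B) = d -> last d C = c -> last c (y2 :: D) = d -> y1 != y2 ->
  ~ L_UNIQ (U ++ c :: (y1 :: B) ++ C ++ (y2 :: D) ++ W).
Proof.
move=> hB hC hD hne HU.
set B1 := y1 :: B; set D1 := y2 :: D.
have E : forall X Y Z, delim (U ++ c :: X ++ Y ++ Z ++ W) =
   None :: (map Some U ++ [:: Some c]) ++ map Some X ++ map Some Y ++ map Some Z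
        ++ rcons (map Some W) None.
  by move=> X Y Z; rewrite /delim map_cat rcons_cat /= !map_cat !rcons_cat -catA.
have := HU (U ++ c :: D1 ++ C ++ B1 ++ W).
have Hsame : same_bigrams (delim (U ++ c :: D1 ++ C ++ B1 ++ W))
                          (delim (U ++ c :: B1 ++ C ++ D1 ++ W)).
  move=> i j; rewrite /bigram !E /=.
  apply/esym/permP.
  apply: (@swap_perm _ None (Some c) (Some d) (map Some U ++ [:: Some c]) (map Some B1) (map Some C) (map Some D1) (rcons (map Some W) None)).
  - by rewrite last_cat.
  - by rewrite last_map hB.
  - by rewrite last_map hC.
  - by rewrite last_map hD.
move=> /(_ Hsame); rewrite /delim => -[] /rcons_inj [] /(inj_map (@Some_inj _)).
move=> /(f_equal (drop (size U))); rewrite !drop_size_cat // => -[].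
by move=> e; move: hne; rewrite e eqxx.
Qed.

Lemma not_uniq2 (S : eqType) (U B1 C D1 W : seq S) (c d : S) :
  B1 != [::] -> D1 != [::] ->
  last c B1 = d -> last d C = c -> last c D1 = d -> head c B1 != head c D1 ->
  ~ L_UNIQ (U ++ c :: B1 ++ C ++ D1 ++ W).
Proof.
case: B1 => [|y1 B] // _; case: D1 => [|y2 D] // _ hB hC hD hne.
exact: (@not_uniq_struct S U B C D W c d y1 y2 hB hC hD hne).
Qed.

Lemma head_rcons_neq (S : eqType) (x a b : S) (v : seq S) :
  x \notin v -> b != x -> head a (rcons v b) != x.
Proof.
case: v => [|y v] /= Hx Hb //; apply: contraNneq Hx => ->.
by rewrite in_cons eqxx.
Qed.

Theorem lemma1 (S : finType) (x a b : S) :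
  a != x -> b != x ->
  forall s : seq S, in_K x a b s -> ~ L_UNIQ s.
Proof.
move=> hax hbx s [[u [v [w [Hs Hav]]]] [u' [v' [w' [Hs' Hxv]]]]].
have Heq : u' ++ a :: (v' ++ b :: w') = u ++ a :: (x :: v ++ b :: w)
  by rewrite -Hs' Hs.
have Hhv : head a (rcons v' b) != x by exact: head_rcons_neq.
case: (split3 Heq) => [[r [Hu Hr]]|[[Hu [_ Hr]]|[r [Hu Hr]]]].
- case: (split3 Hr) => [[m [Hr1 Hw]]|[[Hv [Hba Hw]]|[m [Hv Hm]]]].
  + have -> : s = u' ++ a :: rcons v' b ++ rcons m a ++ (x :: rcons v b) ++ w.
      by (rewrite Hs Hu Hr1 -!cats1; do 4!rewrite -?catA /=).
    refine (@not_uniq2 _ _ _ _ _ _ _ b _ _ _ _ _ _) => //=.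
    * by case: (v').
    * by rewrite last_rcons.
    * by rewrite last_rcons.
    * by rewrite last_rcons.
  + have -> : s = u' ++ a :: rcons v' a ++ [::] ++ (x :: rcons v b) ++ w.
      by (rewrite Hs Hu Hv -!cats1; do 4!rewrite -?catA /=).
    refine (@not_uniq2 _ _ _ _ _ _ _ a _ _ _ _ _ _) => //=.
    * by case: (v').
    * by rewrite last_rcons.
    * by rewrite last_rcons.
    * by move: Hhv; rewrite Hba.
  + case: m Hv Hm => [|y m] Hv /=.
    * by case=> E _; move: hbx; rewrite E eqxx.
    * by case=> E _; move: Hxv; rewrite Hv E mem_cat !in_cons eqxx !orbT.
- case: (v') Hr Hxv => [|y v2] /=.
  + by case=> E _; move: hbx; rewrite E eqxx.
  + by case=> -> _; rewrite in_cons eqxx.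
- case: (split3 (p1 := x :: v) Hr) => [[m [Hr1 Hw]]|[[Hv [Hba Hw]]|[m [Hv Hm]]]].
  + have -> : s = u ++ a :: (x :: rcons v b) ++ rcons m a ++ rcons v' b ++ w'.
      by (rewrite Hs' Hu Hr1 -!cats1; do 4!rewrite -?catA /=).
    refine (@not_uniq2 _ _ _ _ _ _ _ b _ _ _ _ _ _) => //=.
    * by case: (v').
    * by rewrite last_rcons.
    * by rewrite last_rcons.
    * by rewrite last_rcons.
    * by rewrite eq_sym.
  + have -> : s = u ++ a :: (x :: rcons v a) ++ [::] ++ rcons v' b ++ w'.
      by (rewrite Hs' Hu -Hv -!cats1 -Hba; do 4!rewrite -?catA /=).
    refine (@not_uniq2 _ _ _ _ _ _ _ a _ _ _ _ _ _) => //=.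
    * by case: (v').
    * by rewrite last_rcons.
    * by rewrite last_rcons.
    * by rewrite eq_sym.
  + have : a \in x :: v by rewrite Hv mem_cat in_cons eqxx orbT.
    by rewrite in_cons (negbTE hax) (negbTE Hav).
Qed.
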